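(* In the retraining process below, with $\beta=\alpha\big((1+\tfrac1N)\alpha-\tfrac1N\big)$, for every $r\ge0$, $$S^{(r+1)}=\frac{\frac1N(1+2\alpha)+(1-\frac1N)(1+\alpha)S^{(0)}}{1+(1+\frac1N)\alpha}-\frac1N\Big(1-\frac1N\Big)\frac{(1-S^{(0)})\,\alpha\,\beta^{r}}{1+(1+\frac1N)\alpha},$$ and moreover, for each $k\in[s]$, $\nu_k^{(r)}:=\mathbb E[(p^{(r)}_k)^2]$ satisfies $$\nu_k^{(r+1)}=\frac{p^{(0)}_k}{N}\cdot\frac{1+2\alpha-(1-\frac1N)\alpha\beta^{r}}{1+(1+\frac1N)\alpha}+\Big(1-\frac1N\Big)(p^{(0)}_k)^2\cdot\frac{1+\alpha+\frac{\alpha}{N}\beta^{r}}{1+(1+\frac1N)\alpha}.$$ If $N>1$ and $\hat N>1$ then $\beta\in(0,1)$.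
   Context: Fix integers $s\ge2$, $N\ge1$, $\hat N\ge1$, let $\alpha=\hat N/(N+\hat N)$, and let $\mathbf p^{(0)}\in\Delta_s$ (probability simplex) with $S^{(0)}:=\|\mathbf p^{(0)}\|_2^2=\sum_k(p^{(0)}_k)^2$. Let $\mathbf e_1,\dots,\mathbf e_s$ be the standard basis of $\mathbb{R}^s$. Draw organic tokens $\mathbf z^{(0)}_1,\dots,\mathbf z^{(0)}_N$ i.i.d. with $\Pr(\mathbf z^{(0)}_n=\mathbf e_k)=p^{(0)}_k$; this same organic sample is used in every round. Set $\mathbf p^{(1)}=\frac1N\sum_{n=1}^N\mathbf z^{(0)}_n$. For $r\ge2$, conditionally on everything generated so far draw $\mathbf z^{(r-1)}_1,\dots,\mathbf z^{(r-1)}_{\hat N}$ i.i.d. with $\Pr(\mathbf z^{(r-1)}_n=\mathbf e_k)=p^{(r-1)}_k$, and set $\mathbf p^{(r)}=\frac{1}{N+\hat N}\big(\sum_{n=1}^N\mathbf z^{(0)}_n+\sum_{n=1}^{\hat N}\mathbf z^{(r-1)}_n\big)$. Let $S^{(r)}=\mathbb E[\|\mathbf p^{(r)}\|_2^2]$ for $r\ge1$. *)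

(* Defs.v *)
(* The retraining process is a finite Markov chain; all
   expectations are written as explicit finite sums over sample outcomes. *)
From HB Require Import structures.
From mathcomp Require Import all_boot all_order all_algebra.
Import Order.TTheory GRing.Theory Num.Theory.
Local Open Scope ring_scope.

Section Retrain.
Variable R : realFieldType.

Definition cnt (n s : nat) (z : {ffun 'I_n -> 'I_s}) (k : 'I_s) : nat :=
  #|[set i | z i == k]|.

Definition sample_prob (n s : nat) (q : 'I_s -> R) (z : {ffun 'I_n -> 'I_s}) : R :=
  \prod_(i < n) q (z i).

Definition p_first (N s : nat) (z0 : {ffun 'I_N -> 'I_s}) : 'I_s -> R :=
  fun k => (cnt N s z0 k)%:R / N%:R.

(* p^(r) = (sum_n z^(0)_n + sum_n z^(r-1)_n) / (N + Nhat) *)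
Definition p_next (N Nh s : nat) (z0 : {ffun 'I_N -> 'I_s})
  (zh : {ffun 'I_Nh -> 'I_s}) : 'I_s -> R :=
  fun k => ((cnt N s z0 k)%:R + (cnt Nh s zh k)%:R) / (N + Nh)%:R.

(* expect_from z0 m q g = E[ g(p^(r+m)) | z^(0) = z0, p^(r) = q ] *)
Fixpoint expect_from (N Nh s : nat) (z0 : {ffun 'I_N -> 'I_s}) (m : nat)
  (q : 'I_s -> R) (g : ('I_s -> R) -> R) : R :=
  match m with
  | 0 => g q
  | m'.+1 => \sum_(zh : {ffun 'I_Nh -> 'I_s})
               sample_prob Nh s q zh * expect_from N Nh s z0 m' (p_next N Nh s z0 zh) g
  end.

(* E[ g(p^(r)) ] for r >= 1 *)
Definition Exp_round (N Nh s : nat) (p0 : 'I_s -> R) (r : nat)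
  (g : ('I_s -> R) -> R) : R :=
  \sum_(z0 : {ffun 'I_N -> 'I_s})
     sample_prob N s p0 z0 * expect_from N Nh s z0 r.-1 (p_first N s z0) g.

Definition S_round (N Nh s : nat) (p0 : 'I_s -> R) (r : nat) : R :=
  Exp_round N Nh s p0 r (fun q => \sum_(k < s) q k ^+ 2).

Definition nu_round (N Nh s : nat) (p0 : 'I_s -> R) (r : nat) (k : 'I_s) : R :=
  Exp_round N Nh s p0 r (fun q => q k ^+ 2).

Definition S0 (s : nat) (p0 : 'I_s -> R) : R := \sum_(k < s) p0 k ^+ 2.

Definition alpha (N Nh : nat) : R := Nh%:R / (N + Nh)%:R.

Definition beta (N Nh : nat) : R :=
  alpha N Nh * ((1 + 1 / N%:R) * alpha N Nh - 1 / N%:R).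

End Retrain.

(* Main.v *)
Require Import Defs.
From HB Require Import structures.
From mathcomp Require Import all_boot all_order all_algebra.
From mathcomp Require Import ring lra.
Import Order.TTheory GRing.Theory Num.Theory.
Local Open Scope ring_scope.

Lemma distr_sample (R : realFieldType) (n s : nat) (q : 'I_s -> R)
  (w : 'I_n -> 'I_s -> R) :
  \sum_(z : {ffun 'I_n -> 'I_s}) \prod_(i < n) (q (z i) * w i (z i)) =
  \prod_(i < n) \sum_(x < s) q x * w i x.
Proof. by rewrite bigA_distr_bigA. Qed.

Lemma sample_ind (R : realFieldType) (n s : nat) (q : 'I_s -> R) (k : 'I_s)
  (A : {set 'I_n}) : \sum_(x < s) q x = 1 ->
  \sum_(z : {ffun 'I_n -> 'I_s}) sample_prob R n s q z *
     \prod_(i in A) ((z i == k)%:R : R) = q k ^+ #|A|.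
Proof.
move=> Hq.
have := @distr_sample R n s q (fun i x => if i \in A then ((x == k)%:R : R) else 1).
rewrite /sample_prob => H.
transitivity (\prod_(i in A) \sum_(x < s) q x * (x == k)%:R).
  transitivity (\prod_(i < n) \sum_(x < s) q x * (if i \in A then ((x == k)%:R : R) else 1)); last first.
    rewrite [RHS]big_mkcond; apply: eq_bigr => i _; case: (i \in A) => //.
    rewrite (eq_bigr q) ?Hq // => x _; exact: mulr1.
  rewrite -H; apply: eq_bigr => z _.
  rewrite big_split /= (big_mkcond (fun i => i \in A)) /=; congr (_ * _).
rewrite -prodr_const; apply: eq_bigr => i _.
by rewrite (bigD1 k) //= eqxx big1 ?addr0 ?mulr1 // => x /negbTE ->; rewrite mulr0.
Qed.

Lemma cntE (R : realFieldType) n s (z : {ffun 'I_n -> 'I_s}) k :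
  ((cnt n s z k)%:R : R) = \sum_(i < n) ((z i == k)%:R : R).
Proof.
rewrite /cnt -[in LHS](mulr1n 1) -sumr_const big_mkcond /=.
by apply: eq_bigr => i _; rewrite inE; case: (z i == k).
Qed.

Lemma sample_ind1 (R : realFieldType) n s (q : 'I_s -> R) k j :
  \sum_(x < s) q x = 1 ->
  \sum_(z : {ffun 'I_n -> 'I_s}) sample_prob R n s q z * ((z j == k)%:R : R) = q k.
Proof.
move=> Hq; have := @sample_ind R n s q k [set j] Hq.
by rewrite cards1 expr1 => <-; apply: eq_bigr => z _; rewrite big_set1.
Qed.

Lemma sample_ind2 (R : realFieldType) n s (q : 'I_s -> R) k j j' :
  \sum_(x < s) q x = 1 ->
  \sum_(z : {ffun 'I_n -> 'I_s}) sample_prob R n s q z *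
     (((z j == k)%:R : R) * (z j' == k)%:R) = if j == j' then q k else q k ^+ 2.
Proof.
move=> Hq; case: eqP => [<-|/eqP Hjj].
  rewrite -(@sample_ind1 R n s q k j Hq); apply: eq_bigr => z _.
  by case: (z j == k); rewrite ?mulr1 ?mulr0.
have := @sample_ind R n s q k [set j; j'] Hq.
rewrite cards2 Hjj => <-; apply: eq_bigr => z _.
rewrite big_setU1 ?big_set1 //= inE; exact: Hjj.
Qed.

Lemma sample_cnt1 (R : realFieldType) n s (q : 'I_s -> R) k :
  \sum_(x < s) q x = 1 ->
  \sum_(z : {ffun 'I_n -> 'I_s}) sample_prob R n s q z * (cnt n s z k)%:R = n%:R * q k.
Proof.
move=> Hq.
under eq_bigr do rewrite cntE big_distrr.
rewrite exchange_big /=.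
under eq_bigr do rewrite sample_ind1 //.
by rewrite sumr_const card_ord mulr_natl.
Qed.

Lemma sample_cnt2 (R : realFieldType) n s (q : 'I_s -> R) k :
  \sum_(x < s) q x = 1 ->
  \sum_(z : {ffun 'I_n -> 'I_s}) sample_prob R n s q z * (cnt n s z k)%:R ^+ 2
    = n%:R * q k + n%:R * (n.-1)%:R * q k ^+ 2.
Proof.
move=> Hq.
under eq_bigr do rewrite cntE expr2 mulr_suml big_distrr /=.
rewrite exchange_big /=.
under eq_bigr => j _.
  under eq_bigr => z _ do rewrite big_distrr /= big_distrr /=.
  rewrite exchange_big /=.
  over.
under eq_bigr => j _ do under eq_bigr => j' _ do rewrite sample_ind2 //.
transitivity (\sum_(j < n) (q k + (n.-1)%:R * q k ^+ 2)).
  apply: eq_bigr => j _; rewrite (bigD1 j) //= eqxx; congr (_ + _).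
  rewrite (eq_bigr (fun _ => q k ^+ 2)); last by move=> j' /negbTE; rewrite eq_sym => ->.
  rewrite sumr_const mulr_natl; congr (_ *+ _).
  by rewrite -[in RHS](card_ord n) -(cardC1 j); apply: eq_card => i; rewrite !inE.
by rewrite sumr_const card_ord; ring.
Qed.

Lemma sum_prob (R : realFieldType) n s (q : 'I_s -> R) :
  \sum_(x < s) q x = 1 ->
  \sum_(z : {ffun 'I_n -> 'I_s}) sample_prob R n s q z = 1.
Proof.
move=> Hq; case: s q Hq => [|s] q Hq.
  by move: Hq; rewrite big_ord0 => /eqP; rewrite eq_sym oner_eq0.
have := @sample_ind R n s.+1 q ord0 set0 Hq; rewrite cards0 expr0 => <-.
by apply: eq_bigr => z _; rewrite big_set0 mulr1.
Qed.

Lemma cnt_sum (R : realFieldType) n s (z : {ffun 'I_n -> 'I_s}) :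
  \sum_(k < s) ((cnt n s z k)%:R : R) = n%:R.
Proof.
under eq_bigr do rewrite cntE.
rewrite exchange_big /=.
rewrite (eq_bigr (fun _ => 1)); first by rewrite sumr_const card_ord.
move=> i _; rewrite (bigD1 (z i)) //= eqxx big1 ?addr0 // => x.
by rewrite eq_sym => /negbTE ->.
Qed.

Lemma p_next_sum (R : realFieldType) N Nh s z0 zh : (0 < N + Nh)%N ->
  \sum_(k < s) p_next R N Nh s z0 zh k = 1.
Proof.
move=> H; rewrite /p_next -mulr_suml big_split /= !cnt_sum -natrD mulfV //.
by rewrite pnatr_eq0 -lt0n.
Qed.

Lemma expect_comp (R : realFieldType) N Nh s z0 m q g :
  expect_from R N Nh s z0 m.+1 q g =
  expect_from R N Nh s z0 m q (fun q' => expect_from R N Nh s z0 1 q' g).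
Proof.
elim: m q => [|m IH] q //=.
by apply: eq_bigr => zh _; rewrite -IH.
Qed.

Lemma expect_lin (R : realFieldType) N Nh s z0 m q f1 f2 (a b c : R) :
  (0 < N + Nh)%N -> \sum_(k < s) q k = 1 ->
  expect_from R N Nh s z0 m q (fun q' => a + b * f1 q' + c * f2 q') =
  a + b * expect_from R N Nh s z0 m q f1 + c * expect_from R N Nh s z0 m q f2.
Proof.
move=> HN; elim: m q => [|m IH] q Hq //=.
under eq_bigr do rewrite IH ?p_next_sum //.
under eq_bigr do rewrite !mulrDr.
rewrite !big_split /= -big_distrl /= sum_prob // mul1r.
by congr (_ + _ + _); rewrite mulr_sumr; apply: eq_bigr => zh _; ring.
Qed.

Lemma expect_sum (R : realFieldType) N Nh s z0 m q (f : 'I_s -> ('I_s -> R) -> R) :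
  expect_from R N Nh s z0 m q (fun q' => \sum_(k < s) f k q') =
  \sum_(k < s) expect_from R N Nh s z0 m q (f k).
Proof.
elim: m q => [|m IH] q //=.
under eq_bigr do rewrite IH big_distrr.
by rewrite exchange_big.
Qed.

Lemma step_h (R : realFieldType) N Nh s z0 q k :
  \sum_(x < s) q x = 1 ->
  expect_from R N Nh s z0 1 q (fun q' => q' k) =
  ((cnt N s z0 k)%:R + Nh%:R * q k) / (N + Nh)%:R.
Proof.
move=> Hq /=; rewrite /p_next.
under eq_bigr do rewrite mulrA mulrDr.
by rewrite -mulr_suml big_split /= -big_distrl /= sum_prob // mul1r sample_cnt1.
Qed.

Lemma step_g (R : realFieldType) N Nh s z0 q k :
  (0 < N + Nh)%N -> \sum_(x < s) q x = 1 ->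
  expect_from R N Nh s z0 1 q (fun q' => q' k ^+ 2) =
  ((cnt N s z0 k)%:R ^+ 2 + 2 * (cnt N s z0 k)%:R * (Nh%:R * q k)
    + (Nh%:R * q k + Nh%:R * (Nh.-1)%:R * q k ^+ 2)) / (N + Nh)%:R ^+ 2.
Proof.
move=> HN Hq /=; rewrite /p_next.
have d0 : ((N + Nh)%:R : R) != 0 by rewrite pnatr_eq0 -lt0n.
set c := ((cnt N s z0 k)%:R : R). set d := ((N + Nh)%:R : R).
transitivity (\sum_(zh : {ffun 'I_Nh -> 'I_s})
   (c ^+ 2 * sample_prob R Nh s q zh + (2 * c) * (sample_prob R Nh s q zh * (cnt Nh s zh k)%:R)
    + sample_prob R Nh s q zh * (cnt Nh s zh k)%:R ^+ 2) / (N + Nh)%:R ^+ 2).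
  by apply: eq_bigr => zh _; field; rewrite -natrD.
rewrite -mulr_suml !big_split /= -!big_distrr /= sum_prob // mulr1.
by rewrite sample_cnt1 // sample_cnt2 //.
Qed.

Lemma expect_ext (R : realFieldType) N Nh s z0 m q f g :
  (0 < N + Nh)%N -> (forall q', \sum_(k < s) q' k = 1 -> f q' = g q') ->
  \sum_(k < s) q k = 1 ->
  expect_from R N Nh s z0 m q f = expect_from R N Nh s z0 m q g.
Proof.
move=> HN Hfg; elim: m q => [|m IH] q Hq /=; first exact: Hfg.
by apply: eq_bigr => zh _; rewrite IH // p_next_sum.
Qed.

Lemma p_first_sum (R : realFieldType) N s z0 : (0 < N)%N ->
  \sum_(k < s) p_first R N s z0 k = 1.
Proof.
move=> H; rewrite /p_first -mulr_suml cnt_sum mulfV //.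
by rewrite pnatr_eq0 -lt0n.
Qed.

Lemma mean_const (R : realFieldType) N Nh s z0 k m : (0 < N)%N ->
  expect_from R N Nh s z0 m (p_first R N s z0) (fun q' => q' k) =
  (cnt N s z0 k)%:R / N%:R.
Proof.
move=> HN; have HNN : (0 < N + Nh)%N by rewrite addn_gt0 HN.
have x0 : (N%:R : R) != 0 by rewrite pnatr_eq0 -lt0n.
elim: m => [|m IH] //.
rewrite expect_comp.
rewrite (@expect_ext R N Nh s z0 m _ _
  (fun q' => (cnt N s z0 k)%:R / (N + Nh)%:R + (Nh%:R / (N + Nh)%:R) * q' k
             + 0 * q' k)) //; last first.
  - exact: p_first_sum.
  - by move=> q' Hq'; rewrite step_h // mul0r addr0 mulrDl mulrAC.
rewrite expect_lin //; last exact: p_first_sum.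
rewrite IH mul0r addr0 natrD; field.
by rewrite x0 -natrD pnatr_eq0 -lt0n.
Qed.

Definition Vf (R : realFieldType) (x y c t : R) : R :=
  let al := y / (x + y) in
  ((1 + al) * (c / x) ^+ 2 + al / x * (c / x) + t * (al / x) * ((c / x) ^+ 2 - c / x))
   / (1 + (1 + 1 / x) * al).

Lemma Vf_base (R : realFieldType) (x y c : R) : 0 < x -> 0 < y ->
  Vf R x y c 1 = (c / x) ^+ 2.
Proof.
move=> hx hy; rewrite /Vf; field.
have H1 : 0 < x + y by lra.
have H2 : 0 < x * (x + y) + (x + 1) * y by nra.
by rewrite (gt_eqF hx) (gt_eqF H1) (gt_eqF H2).
Qed.

Lemma Vf_step (R : realFieldType) (x y c t : R) : 0 < x -> 0 < y ->
  c ^+ 2 / (x + y) ^+ 2 + ((2 * c * y + y) / (x + y) ^+ 2) * (c / x)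
  + (y * (y - 1) / (x + y) ^+ 2) * Vf R x y c t
  = Vf R x y c ((y / (x + y)) * ((1 + 1 / x) * (y / (x + y)) - 1 / x) * t).
Proof.
move=> hx hy; rewrite /Vf; field.
have H1 : 0 < x + y by lra.
have H2 : 0 < x * (x + y) + (x + 1) * y by nra.
by rewrite (gt_eqF hx) (gt_eqF H1) (gt_eqF H2).
Qed.


Lemma beta_E (R : realFieldType) N Nh :
  beta R N Nh = (Nh%:R / (N%:R + Nh%:R)) * ((1 + 1 / N%:R) * (Nh%:R / (N%:R + Nh%:R)) - 1 / N%:R).
Proof. by rewrite /beta /alpha natrD. Qed.

Lemma var_closed (R : realFieldType) N Nh s z0 k m : (0 < N)%N -> (0 < Nh)%N ->
  expect_from R N Nh s z0 m (p_first R N s z0) (fun q' => q' k ^+ 2) =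
  Vf R N%:R Nh%:R (cnt N s z0 k)%:R (beta R N Nh ^+ m).
Proof.
move=> HN HNh; have HNN : (0 < N + Nh)%N by rewrite addn_gt0 HN.
have hx : (0 : R) < N%:R by rewrite ltr0n.
have hy : (0 : R) < Nh%:R by rewrite ltr0n.
have hxy : (N%:R : R) + Nh%:R != 0 by rewrite gt_eqF // ltr_pwDr.
have ey : (Nh.-1)%:R = Nh%:R - 1 :> R by rewrite -[in RHS](prednK HNh) -natr1 addrK.
elim: m => [|m IH]; first by rewrite expr0 Vf_base.
rewrite expect_comp.
set c := ((cnt N s z0 k)%:R : R).
set x := (N%:R : R) in hx hxy *. set y := (Nh%:R : R) in hy hxy ey *.
rewrite (@expect_ext R N Nh s z0 m _ _
  (fun q' => c ^+ 2 / (x + y) ^+ 2 + ((2 * c * y + y) / (x + y) ^+ 2) * q' k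
             + (y * (y - 1) / (x + y) ^+ 2) * q' k ^+ 2)) //; last first.
  - exact: p_first_sum.
  - move=> q' Hq'; rewrite step_g // natrD ey. field; exact: hxy.
rewrite (@expect_lin R N Nh s z0 m _ (fun q => q k) (fun q => q k ^+ 2)) //; last exact: p_first_sum.
by rewrite mean_const // IH Vf_step // exprS beta_E.
Qed.

Lemma nu_closed (R : realFieldType) s N Nh (p0 : 'I_s -> R) r k :
  (1 <= N)%N -> (1 <= Nh)%N -> \sum_(k < s) p0 k = 1 ->
  nu_round R N Nh s p0 r.+1 k =
       p0 k / N%:R
         * ((1 + 2 * alpha R N Nh
             - (1 - 1 / N%:R) * alpha R N Nh * beta R N Nh ^+ r)
            / (1 + (1 + 1 / N%:R) * alpha R N Nh))
       + (1 - 1 / N%:R) * p0 k ^+ 2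
         * ((1 + alpha R N Nh + alpha R N Nh / N%:R * beta R N Nh ^+ r)
            / (1 + (1 + 1 / N%:R) * alpha R N Nh)).
Proof.
move=> HN HNh Hp.
have hx : (0 : R) < N%:R by rewrite ltr0n.
have hy : (0 : R) < Nh%:R by rewrite ltr0n.
have ex : (N.-1)%:R = N%:R - 1 :> R by rewrite -[in RHS](prednK HN) -natr1 addrK.
rewrite /nu_round /Exp_round /=.
under eq_bigr do rewrite var_closed //.
set t := beta R N Nh ^+ r.
rewrite /alpha natrD.
set x := (N%:R : R) in hx ex *. set y := (Nh%:R : R) in hy *.
have H1 : 0 < x + y by lra.
have H2 : 0 < x * (x + y) + (x + 1) * y by nra.
set al := y / (x + y).
set D := 1 + (1 + 1 / x) * al.
have hD : D != 0.
  have ha : 0 <= al by rewrite /al divr_ge0 // ltW.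
  have hb : 0 <= 1 / x by rewrite divr_ge0 // ltW.
  rewrite /D gt_eqF //; move: ha hb; set b := 1 / x; move=> ha hb; nra.
set K2 := ((1 + al) / x ^+ 2 + t * al / x ^+ 3) / D.
set K1 := (al / x ^+ 2 - t * al / x ^+ 2) / D.
transitivity (\sum_(z0 : {ffun 'I_N -> 'I_s})
   (K2 * (sample_prob R N s p0 z0 * (cnt N s z0 k)%:R ^+ 2)
    + K1 * (sample_prob R N s p0 z0 * (cnt N s z0 k)%:R))).
  apply: eq_bigr => z0 _; rewrite /Vf -/al -/D /K2 /K1; field.
  by rewrite hD (gt_eqF hx).
rewrite big_split /= -!big_distrr /= sample_cnt2 // sample_cnt1 // -/x ex.
rewrite /K2 /K1 /D /al; field.
by rewrite (gt_eqF hx) (gt_eqF H1) (gt_eqF H2).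
Qed.

Lemma S_as_nu (R : realFieldType) s N Nh (p0 : 'I_s -> R) r :
  S_round R N Nh s p0 r = \sum_(k < s) nu_round R N Nh s p0 r k.
Proof.
rewrite /S_round /nu_round /Exp_round.
under eq_bigr do rewrite (@expect_sum R N Nh s _ _ _ (fun k q => q k ^+ 2)) big_distrr.
by rewrite exchange_big.
Qed.

Theorem mainTheorem8 (R : realFieldType) (s N Nh : nat) (p0 : 'I_s -> R) :
  (2 <= s)%N -> (1 <= N)%N -> (1 <= Nh)%N ->
  (forall k, 0 <= p0 k) -> \sum_(k < s) p0 k = 1 ->
  (forall r : nat,
     S_round R N Nh s p0 r.+1 =
       (1 / N%:R * (1 + 2 * alpha R N Nh)
          + (1 - 1 / N%:R) * (1 + alpha R N Nh) * S0 R s p0)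
         / (1 + (1 + 1 / N%:R) * alpha R N Nh)
       - 1 / N%:R * (1 - 1 / N%:R)
         * ((1 - S0 R s p0) * alpha R N Nh * beta R N Nh ^+ r)
         / (1 + (1 + 1 / N%:R) * alpha R N Nh))
  /\
  (forall (r : nat) (k : 'I_s),
     nu_round R N Nh s p0 r.+1 k =
       p0 k / N%:R
         * ((1 + 2 * alpha R N Nh
             - (1 - 1 / N%:R) * alpha R N Nh * beta R N Nh ^+ r)
            / (1 + (1 + 1 / N%:R) * alpha R N Nh))
       + (1 - 1 / N%:R) * p0 k ^+ 2
         * ((1 + alpha R N Nh + alpha R N Nh / N%:R * beta R N Nh ^+ r)
            / (1 + (1 + 1 / N%:R) * alpha R N Nh)))
  /\
  ((1 < N)%N -> (1 < Nh)%N -> 0 < beta R N Nh < 1).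
Proof.
move=> Hs HN HNh Hpos Hp.
have hx : (0 : R) < N%:R by rewrite ltr0n.
have hy : (0 : R) < Nh%:R by rewrite ltr0n.
have H1 : (0 : R) < N%:R + Nh%:R by lra.
split; [|split].
- move=> r; rewrite S_as_nu.
  under eq_bigr do rewrite nu_closed //.
  set A := (1 + 2 * alpha R N Nh - (1 - 1 / N%:R) * alpha R N Nh * beta R N Nh ^+ r)
            / (1 + (1 + 1 / N%:R) * alpha R N Nh).
  set B := (1 + alpha R N Nh + alpha R N Nh / N%:R * beta R N Nh ^+ r)
            / (1 + (1 + 1 / N%:R) * alpha R N Nh).
  rewrite big_split /=.
  under eq_bigr do rewrite mulrAC.
  under [X in _ + X = _]eq_bigr do rewrite mulrAC.
  rewrite -!mulr_suml -big_distrr /= Hp -/(S0 R s p0) /A /B.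
  have ha : 0 <= alpha R N Nh by rewrite /alpha divr_ge0 // ltW // ltr0n.
  have hb : 0 <= 1 / N%:R :> R by rewrite divr_ge0 // ltW.
  have hD : 1 + (1 + 1 / N%:R) * alpha R N Nh != 0.
    by rewrite gt_eqF //; move: ha hb; set a := alpha R N Nh; set b := 1 / N%:R; move=> ha hb; nra.
  set D := 1 + (1 + 1 / N%:R) * alpha R N Nh in hD *.
  field; by rewrite hD (gt_eqF hx).
- by move=> r k; rewrite nu_closed.
move=> HN2 HNh2.
have ey : (2 : R) <= Nh%:R by rewrite ler_nat.
have ex : (2 : R) <= N%:R by rewrite ler_nat.
have -> : beta R N Nh = Nh%:R * (Nh%:R - 1) / (N%:R + Nh%:R) ^+ 2.
  rewrite beta_E; field; by rewrite (gt_eqF hx) (gt_eqF H1).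
apply/andP; split.
  by apply: divr_gt0; [apply: mulr_gt0; lra | apply: exprn_gt0].
rewrite ltr_pdivrMr ?exprn_gt0 // mul1r; nra.
Qed.
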